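(* Let $q$ be a prime power and $1\leq d\leq n-1$. Then $\mathrm{PG}_d(n,q)$ is additive under $\mathrm{EA}(q^{n+1})$.
   Context: $\mathrm{PG}_d(n,q)$ is the design whose points are the points of $\mathrm{PG}(n,q)$ and whose blocks are the point sets of all $d$-dimensional projective subspaces. $\mathrm{EA}(q^{n+1})$ is the elementary abelian group of order $q^{n+1}$. A design $(V,\mathscr B)$ is additive under an abelian group $G$ if there is an injective map $f:V\to G$ such that $\sum_{x\in B}f(x)=0$ for every block $B\in\mathscr B$. *)

(* Defs.v *)
From HB Require Import structures.
From mathcomp Require Import all_boot all_order all_algebra.
Set Implicit Arguments. Unset Strict Implicit. Unset Printing Implicit Defensive.
Import GRing.Theory.
Local Open Scope ring_scope.

Definition additive_design (V : finType) (blocks : {set {set V}})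
  (G : zmodType) : Prop :=
  exists f : V -> G, injective f /\
    forall B, B \in blocks -> \sum_(x in B) f x = 0.

(* Projective subspaces of PG(n, F) = vector subspaces of F^(n+1). *)
Definition is_proj_subspace (F : finFieldType) (n k : nat)
  (S : {set 'rV[F]_(n.+1)}) : bool :=
  [exists A : 'M[F]_(k.+1, n.+1),
     (\rank A == k.+1) && (S == [set v | (v <= A)%MS])].

Definition PGpoint (F : finFieldType) (n : nat) : finType :=
  {S : {set 'rV[F]_(n.+1)} | is_proj_subspace 0%N S}.

Definition PGblocks (F : finFieldType) (n d : nat) : {set {set PGpoint F n}} :=
  [set B | [exists W : {set 'rV[F]_(n.+1)},
              is_proj_subspace d W &&
              (B == [set P : PGpoint F n | val P \subset W])]].

(* Main.v *)
Require Import Defs.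
From HB Require Import structures.
From mathcomp Require Import all_boot all_order all_algebra.
From mathcomp Require Import all_fingroup all_solvable all_field.
Set Implicit Arguments. Unset Strict Implicit. Unset Printing Implicit Defensive.
Import GRing.Theory FinRing.Theory.
Local Open Scope ring_scope.

Lemma card_finF0 (F : finFieldType) : (#|F|%:R : F) = 0.
Proof. by rewrite -zmodXgE -cardsT expg_cardG // inE. Qed.

Lemma sum_pow_lt (F : finFieldType) j : (j < #|F|.-1)%N -> \sum_(t : F) t ^+ j = 0.
Proof.
move=> hj; case: j hj => [|j] hj.
  by rewrite (eq_bigr (fun _ => 1)) ?sumr_const ?card_finF0 // => t _; rewrite expr0.
have [l /andP[l0 lj]|none] := pickP (fun l : F => (l != 0) && (l ^+ j.+1 != 1)).
  have : \sum_(t : F) t ^+ j.+1 = l ^+ j.+1 * \sum_(t : F) t ^+ j.+1.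
    rewrite mulr_sumr (reindex_inj (mulfI l0)) /=.
    by apply: eq_bigr => t _; rewrite exprMn.
  move/eqP; rewrite -subr_eq0 -{1}[\sum_t _]mul1r -mulrBl mulf_eq0 subr_eq0 eq_sym.
  by rewrite (negbTE lj) /= => /eqP.
exfalso.
have nz : ('X^(j.+1) - 1 : {poly F}) != 0.
  by rewrite -size_poly_gt0 size_XnsubC.
have := max_poly_roots nz _ (enum_uniq (predC1 0)).
rewrite size_XnsubC // -cardE cardC1 ltnS leqNgt hj.
move=> H; suff: ~~ true by []. apply: H; apply/allP => x; rewrite mem_enum /= => x0.
have := none x; rewrite /= (x0 : x != 0) /= => /negbFE/eqP hx.
by rewrite /root !hornerE hx subrr.
Qed.

Lemma sum_pow_last (F : finFieldType) : \sum_(t : F) t ^+ #|F|.-1 = -1.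
Proof.
have Fgt1 : (1 < #|F|)%N by exact: finNzRing_gt1.
rewrite (bigD1 0) //= expr0n.
have -> : (#|F|.-1 == 0%N) = false by case: #|F| Fgt1 => [|[|]].
rewrite add0r (eq_bigr (fun _ => 1)); last first.
  move=> t t0; apply: (mulfI t0); rewrite mulr1 -exprS prednK ?expf_card //.
  exact: ltnW.
rewrite sumr_const.
have -> : #|[pred i : F | i != 0]| = #|F|.-1 by rewrite -(cardC1 (0 : F)).
apply: (addrI 1); rewrite subrr nat1r prednK ?card_finF0 //; exact: ltnW.
Qed.

Lemma line_sum (F : finFieldType) (L : fieldExtType F) (c z : L) :
  \sum_(t : F) (c + t%:A * z) ^+ #|F|.-1 = - z ^+ #|F|.-1.
Proof.
have Fgt1 : (1 < #|F|)%N by exact: finNzRing_gt1.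
set k := #|F|.-1.
have key i : \sum_(t : F) (c ^+ (k - i) * (t%:A * z) ^+ i) *+ 'C(k, i)
    = (c ^+ (k - i) * z ^+ i *+ 'C(k, i)) * (\sum_(t : F) t ^+ i)%:A.
  rewrite scaler_suml mulr_sumr; apply: eq_bigr => t _.
  rewrite exprMn -[(t ^+ i)%:A]in_algE rmorphXn /=.
  by rewrite mulrnAl [t%:A ^+ i * _]mulrC mulrA.
under eq_bigr => t _ do rewrite exprDn.
rewrite exchange_big big_ord_recr /= big1 ?add0r => [|i _].
  by rewrite key subnn expr0 mul1r binn mulr1n sum_pow_last scaleN1r mulrN1.
by rewrite key sum_pow_lt ?scale0r ?mulr0.
Qed.

Lemma natL0 (F : finFieldType) (L : fieldExtType F) : (#|F|%:R : L) = 0.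
Proof. by rewrite -(scaler_nat #|F| (1 : L)) card_finF0 scale0r. Qed.

Lemma sub_sum (F : finFieldType) (L : fieldExtType F) (n k : nat)
  (phi : 'rV[F]_(n.+1) -> L) (A : 'M[F]_(k.+2, n.+1)) :
  {morph phi : x y / x + y} -> (forall (t : F) x, phi (t *: x) = t *: phi x) ->
  row_free A ->
  \sum_(v in [set v : 'rV[F]_(n.+1) | (v <= A)%MS]) (phi v) ^+ #|F|.-1 = 0.
Proof.
move=> phiD phiZ fA.
have -> : [set v : 'rV[F]_(n.+1) | (v <= A)%MS] = [set x *m A | x in [set: 'rV[F]_(k.+2)]].
  apply/setP => v; rewrite inE; apply/submxP/imsetP => [[x ->]|[x _ ->]].
    by exists x; rewrite ?inE.
  by exists x.
rewrite big_imset /=; last by move=> x y _ _; apply: row_free_inj.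
pose G (x : 'rV[F]_(k.+2)) := phi (x *m A) ^+ #|F|.-1.
change (\sum_(x in [set: 'rV[F]_(k.+2)]) G x = 0).
rewrite (eq_bigl xpredT); last by move=> x; rewrite inE.
rewrite (reindex (fun p : 'rV[F]_1 * 'rV[F]_(k.+1) => (row_mx p.1 p.2 : 'rV[F]_(1 + k.+1)))) /=; last first.
  exists (fun x : 'rV[F]_(1 + k.+1) => (lsubmx x, rsubmx x)) => [[a b] _|x _] /=.
    by rewrite row_mxKl row_mxKr.
  by rewrite hsubmxK.
rewrite -(pair_big xpredT xpredT (fun (a : 'rV[F]_1) (b : 'rV[F]_(k.+1)) => G (row_mx a b))) /= exchange_big /=.
have eA : A = col_mx (usubmx (A : 'M_(1 + k.+1, n.+1))) (dsubmx (A : 'M_(1 + k.+1, n.+1))).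
  by rewrite vsubmxK.
set U := usubmx (A : 'M_(1 + k.+1, n.+1)) in eA; set D := dsubmx (A : 'M_(1 + k.+1, n.+1)) in eA.
rewrite (eq_bigr (fun _ => - phi U ^+ #|F|.-1)); last first.
  move=> b _; rewrite /G eA.
  rewrite (reindex (fun t : F => (t%:M : 'rV[F]_1))) /=; last first.
    exists (fun a : 'rV[F]_1 => a 0 0) => [t _|a _]; first by rewrite mxE eqxx mulr1n.
    by rewrite -mx11_scalar.
  rewrite -[RHS](line_sum (phi (b *m D))); apply: eq_bigr => t _.
  have -> : (row_mx (t%:M : 'rV[F]_1) b *m col_mx U D) = (t%:M : 'rV[F]_1) *m U + b *m D.
    exact: mul_row_col.
  by rewrite mul_scalar_mx phiD phiZ mulr_algl addrC.
by rewrite sumr_const card_mx mul1n -mulr_natr natrX natL0 expr0n /= mulr0.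
Qed.

Lemma ext_exists (F : finFieldType) (n : nat) :
  exists L : fieldExtType F, \dim {:L} = n.+1.
Proof.
pose m := (#|F| ^ n.+1)%N.
have F1 : (1 < #|F|)%N by exact: finNzRing_gt1.
have m_gt1: (1 < m)%N by rewrite (ltn_exp2l 0) //.
have m_gt0 := ltnW m_gt1; have m1_gt0: (m.-1 > 0)%N by rewrite -ltnS prednK.
pose q (R : nzRingType) : {poly R} := 'X^m - 'X.
have Dq R: q R = ('X^(m.-1) - 1) * ('X - 0).
  by rewrite subr0 mulrBl mul1r -exprSr prednK.
have /FinSplittingFieldFor[/= L splitLq]: q F != 0.
  by rewrite Dq monic_neq0 ?rpredM ?monicXsubC ?monicXnsubC.
rewrite rmorphB rmorphXn /= map_polyX -/(q L) in splitLq.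
pose Fm := FinFieldExtType L.
have /finField_galois_generator[/= a _ Da]: (1 <= {:L})%VS by apply: sub1v.
pose Em := fixedSpace (a ^+ n.+1)%g; rewrite dimv1 expn1 in Da.
have{splitLq} [zs DqL defL] := splitLq.
have mL0 : (m%:R : L) = 0.
  by rewrite natrX -(scaler_nat #|F| (1 : L)) card_finF0 scale0r expr0n.
have Uzs: uniq zs.
  rewrite -separable_prod_XsubC -(eqp_separable DqL) Dq separable_root andbC.
  rewrite /root !hornerE subr_eq0 eq_sym expr0n gtn_eqF ?oner_eq0 //=.
  rewrite cyclotomic.separable_Xn_sub_1 // -subn1 natrB // subr_eq0.
  by rewrite mL0 eq_sym oner_eq0.
have cardFm : #|Fm| = m.
  suffices /eq_card->: Fm =i zs.
    apply: succn_inj; rewrite (card_uniqP _) //= -(size_prod_XsubC _ id).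
    by rewrite -(eqp_size DqL) size_polyDl size_polyXn // size_polyN size_polyX.
  have in_zs: zs =i Em.
    move=> z; rewrite -root_prod_XsubC -(eqp_root DqL) (sameP fixedSpaceP eqP).
    rewrite /root !hornerE subr_eq0 /= /m; congr (_ == z).
    elim: (n.+1) => [|i IHi]; first by rewrite gal_id.
    by rewrite expgSr expnSr exprM IHi galM ?Da ?memvf.
  suffices defEm: Em = {:L}%VS by move=> z; rewrite in_zs defEm memvf.
  apply/eqP; rewrite eqEsubv subvf -defL -[Em]subfield_closed agenvS //.
  by rewrite subv_add sub1v; apply/span_subvP=> z; rewrite in_zs.
exists L.
have := card_vspace (fullv : {vspace finvect_type L}).
rewrite card_vspacef.
change #|finvect_type L| with #|Fm|.
rewrite cardFm => /eqP.
rewrite eqn_exp2l // => /eqP <-.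
by [].
Qed.

Module IsoAux.
Import VectorInternalTheory.
Lemma iso_rV (F : fieldType) (L : vectType F) (m : nat) :
  \dim {:L} = m ->
  exists (phi : 'rV[F]_m -> L) (psi : L -> 'rV[F]_m),
    [/\ {morph phi : x y / x + y}, (forall (t : F) x, phi (t *: x) = t *: phi x),
        {morph psi : x y / x + y}, cancel phi psi & cancel psi phi].
Proof.
rewrite dimvf => e; case: m / e.
exists (@VectorInternalTheory.r2v F L), (@VectorInternalTheory.v2r F L).
split.
- by move=> x y; rewrite linearD.
- by move=> t x; rewrite linearZ.
- by move=> x y; rewrite linearD.
- exact: VectorInternalTheory.r2vK.
- exact: VectorInternalTheory.v2rK.
Qed.
End IsoAux.

Theorem corollary5p2 (F : finFieldType) (n d : nat) :
  (1 <= d)%N -> (d <= n - 1)%N ->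
  additive_design (PGblocks F n d) 'rV[F]_(n.+1).
Proof.
move=> d1 _.
have [L dimL] := ext_exists F n.
have [phi [psi [phiD phiZ psiD phiK psiK]]] := IsoAux.iso_rV dimL.
set k := #|F|.-1.
have Fgt1 : (1 < #|F|)%N := finNzRing_gt1 F.
have k0 : (0 < k)%N by rewrite /k -ltnS prednK // ltnW.
have kS : k.+1 = #|F| by rewrite /k prednK // ltnW.
have phi0 : phi 0 = 0 by apply: (addrI (phi 0)); rewrite -phiD !addr0.
have psi0 : psi 0 = 0 by apply: (addrI (psi 0)); rewrite -psiD !addr0.
have psiN x : psi (- x) = - psi x.
  by apply: (addrI (psi x)); rewrite -psiD !subrr.
have psi_sum (I : finType) (Q : pred I) (G : I -> L) :
    psi (\sum_(i | Q i) G i) = \sum_(i | Q i) psi (G i).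
  exact: (big_morph psi psiD psi0).
have phi_inj := can_inj phiK; have psi_inj := can_inj psiK.
pose h v := phi v ^+ k.
have h0 : h 0 = 0 by rewrite /h phi0 expr0n eqn0Ngt k0.
have ptP (P : PGpoint F n) :
    exists2 a : 'rV[F]_(n.+1), a != 0 & val P = [set w | (w <= a)%MS].
  case: P => S /= /existsP [a /andP [ra /eqP ->]]; exists a => //.
  by move: ra; rewrite rank_rV; case: (a != 0).
have sumP (a : 'rV[F]_(n.+1)) : a != 0 ->
    \sum_(v in [set w | (w <= a)%MS]) h v = - h a.
  move=> a0.
  have -> : [set w | (w <= a)%MS] = [set t *: a | t in [set: F]].
    apply/setP => w; rewrite inE; apply/sub_rVP/imsetP => [[t ->]|[t _ ->]].
      by exists t; rewrite ?inE.
    by exists t.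
  rewrite big_imset /=; last first.
    move=> t s _ _ /eqP; rewrite -subr_eq0 -scalerBl scaler_eq0 (negbTE a0) orbF.
    by rewrite subr_eq0 => /eqP.
  rewrite (eq_bigl xpredT); last by move=> t; rewrite inE.
  under eq_bigr => t _ do rewrite /h phiZ -mulr_algl exprMn exprZn expr1n.
  by rewrite -mulr_suml -scaler_suml sum_pow_last scaleN1r mulN1r.
pose f (P : PGpoint F n) := - psi (\sum_(v in val P) h v).
have fE P a : a != 0 -> val P = [set w | (w <= a)%MS] -> f P = psi (h a).
  by move=> a0 ea; rewrite /f ea sumP // psiN opprK.
exists f; split.
  move=> P P' e; have [a a0 ea] := ptP P; have [b b0 eb] := ptP P'.
  rewrite (fE _ _ a0 ea) (fE _ _ b0 eb) in e; move/psi_inj: e => e.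
  have pb0 : phi b != 0.
    by apply: contra b0 => /eqP; rewrite -phi0 => /phi_inj ->.
  set z := phi a / phi b.
  have zk : z ^+ #|F| = z.
    rewrite -kS exprSr /z exprMn exprVn.
    by rewrite [phi a ^+ k]e divff ?mul1r // expf_neq0.
  have : z \in (1%AS : {aspace L}) by rewrite Fermat's_little_theorem dimv1 expn1 zk.
  case/vlineP => t ez.
  have eab : a = t *: b.
    apply: phi_inj; rewrite phiZ -mulr_algl -[t%:A]mulr1 -ez /z.
    by rewrite mulr1 divfK.
  have t0 : t != 0.
    by apply: contra a0 => /eqP t0; rewrite eab t0 scale0r.
  apply: val_inj; rewrite ea eb eab; apply/setP => w; rewrite !inE.
  by rewrite (eqmx_scale _ t0).
move=> B; rewrite inE => /existsP [W /andP [/existsP [A /andP [rA /eqP eW]] /eqP ->]].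
rewrite /f sumrN -psi_sum.
have part : \sum_(P in [set P : PGpoint F n | val P \subset W]) \sum_(v in val P) h v
    = \sum_(v in W) h v.
  rewrite (eq_bigr (fun P : PGpoint F n => \sum_(v in W | v \in val P) h v)); last first.
    move=> P; rewrite inE => sPW; apply: eq_bigl => v.
    by case vP: (v \in val P); rewrite ?andbT ?andbF // (subsetP sPW).
  rewrite (exchange_big_dep (fun v => v \in W)) /=; last by move=> P v _ /andP[].
  apply: eq_bigr => v vW.
  have [->|v0] := eqVneq v 0; first by rewrite h0 big1.
  have Pvp : is_proj_subspace 0 [set w : 'rV[F]_(n.+1) | (w <= v)%MS].
    by apply/existsP; exists v; rewrite rank_rV v0 /= eqxx.
  pose Pv : PGpoint F n := exist (fun S => is_true (is_proj_subspace 0 S)) _ Pvp.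
  rewrite (big_pred1 Pv) // => P /=; rewrite vW inE /=; apply/idP/eqP.
    case/andP => sPW vP; have [a a0 ea] := ptP P; apply: val_inj => /=.
    rewrite ea; rewrite ea inE in vP; case/sub_rVP: vP => t vt.
    have t0 : t != 0 by apply: contra v0 => /eqP t0; rewrite vt t0 scale0r.
    by apply/setP => w; rewrite !inE vt (eqmx_scale _ t0).
  move=> -> /=; rewrite inE submx_refl andbT; apply/subsetP => w.
  by rewrite inE eW inE => wv; rewrite eW inE in vW; exact: submx_trans wv vW.
rewrite part eW; case: d d1 A rA {eW} => // d' _ A rA.
by rewrite (sub_sum phiD phiZ rA) psi0 oppr0.
Qed.
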